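(* Let $\xi>0$ be such that $D_\xi=D^TD-\xi^2I$ is nonsingular. Then for every $\omega\ge0$, the matrix $G(j\omega)$ has a singular value equal to $\xi$ if and only if $\lambda=j\omega$ solves $\det H_\xi(\lambda)=0$, where $H_\xi(\lambda)=\lambda I-M_0-\sum_{i=1}^m\left(M_ie^{-\lambda\tau_i}+M_{-i}e^{\lambda\tau_i}\right)$.
   Context: Let $n,m,n_u,n_y$ be positive integers, $A_0,\dots,A_m\in\mathbb{R}^{n\times n}$, $B\in\mathbb{R}^{n\times n_u}$, $C\in\mathbb{R}^{n_y\times n}$, $D\in\mathbb{R}^{n_y\times n_u}$, delays $\tau_1,\dots,\tau_m\ge0$. The transfer function is $G(s)=C\left(sI-A_0-\sum_{i=1}^mA_ie^{-\tau_is}\right)^{-1}B+D$. Standing assumption: the system is stable, i.e. all solutions $s$ of $\det\left(sI-A_0-\sum_{i=1}^mA_ie^{-\tau_is}\right)=0$ have negative real part. For $\xi>0$ put $D_\xi=D^TD-\xi^2I_{n_u}$, $\tilde D_\xi=DD^T-\xi^2I_{n_y}$, and define $2n\times2n$ matrices $M_0=\begin{bmatrix} A_0-BD_\xi^{-1}D^TC & -BD_\xi^{-1}B^T\\ \xi^2 C^T\tilde D_\xi^{-1}C & -A_0^T+C^TDD_\xi^{-1}B^T\end{bmatrix}$, $M_i=\begin{bmatrix}A_i&0\\0&0\end{bmatrix}$, $M_{-i}=\begin{bmatrix}0&0\\0&-A_i^T\end{bmatrix}$, $1\le i\le m$. *)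

(* Defs.v *)
From HB Require Import structures.
From mathcomp Require Import all_boot all_order all_algebra.
From mathcomp Require Import complex.
From mathcomp Require Import reals sequences exp trigo.
Set Implicit Arguments. Unset Strict Implicit. Unset Printing Implicit Defensive.
Import Order.TTheory GRing.Theory Num.Theory.
Local Open Scope ring_scope.
Local Open Scope complex_scope.

Section TDSDefs.
Variable R : realType.
Local Notation Cx := R[i].

Definition cexp (z : Cx) : Cx :=
  (expR (complex.Re z))%:C * ((cos (complex.Im z)) +i* (sin (complex.Im z))).

Definition toCmx {p q : nat} (X : 'M[R]_(p, q)) : 'M[Cx]_(p, q) :=
  map_mx (real_complex R) X.

Definition conjT {p q : nat} (X : 'M[Cx]_(p, q)) : 'M[Cx]_(q, p) :=
  (map_mx (@conjc R) X)^T.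

Definition is_singular_value {p q : nat} (X : 'M[Cx]_(p, q)) (s : R) : Prop :=
  0 <= s /\ eigenvalue (conjT X *m X) ((s ^+ 2)%:C).

Definition char_mx {n m : nat} (A0 : 'M[R]_n) (A : 'I_m -> 'M[R]_n)
  (tau : 'I_m -> R) (s : Cx) : 'M[Cx]_n :=
  s%:M - toCmx A0 - \sum_(i < m) cexp (- ((tau i)%:C * s)) *: toCmx (A i).

Definition tds_stable {n m : nat} (A0 : 'M[R]_n) (A : 'I_m -> 'M[R]_n)
  (tau : 'I_m -> R) : Prop :=
  forall s : Cx, \det (char_mx A0 A tau s) = 0 -> complex.Re s < 0.

Definition tfun {n m nu ny : nat} (A0 : 'M[R]_n) (A : 'I_m -> 'M[R]_n)
  (B : 'M[R]_(n, nu)) (Cm : 'M[R]_(ny, n)) (D : 'M[R]_(ny, nu))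
  (tau : 'I_m -> R) (s : Cx) : 'M[Cx]_(ny, nu) :=
  toCmx Cm *m invmx (char_mx A0 A tau s) *m toCmx B + toCmx D.

Definition Dxi {nu ny : nat} (D : 'M[R]_(ny, nu)) (xi : R) : 'M[R]_nu :=
  D^T *m D - (xi ^+ 2)%:M.
Definition Dtxi {nu ny : nat} (D : 'M[R]_(ny, nu)) (xi : R) : 'M[R]_ny :=
  D *m D^T - (xi ^+ 2)%:M.

Definition Mzero {n nu ny : nat} (A0 : 'M[R]_n) (B : 'M[R]_(n, nu))
  (Cm : 'M[R]_(ny, n)) (D : 'M[R]_(ny, nu)) (xi : R) : 'M[R]_(n + n) :=
  block_mx (A0 - B *m invmx (Dxi D xi) *m D^T *m Cm)
           (- (B *m invmx (Dxi D xi) *m B^T))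
           ((xi ^+ 2) *: (Cm^T *m invmx (Dtxi D xi) *m Cm))
           (- A0^T + Cm^T *m D *m invmx (Dxi D xi) *m B^T).

Definition Mplus {n : nat} (Ai : 'M[R]_n) : 'M[R]_(n + n) :=
  block_mx Ai 0 0 0.
Definition Mminus {n : nat} (Ai : 'M[R]_n) : 'M[R]_(n + n) :=
  block_mx 0 0 0 (- Ai^T).

Definition Hxi {n m nu ny : nat} (A0 : 'M[R]_n) (A : 'I_m -> 'M[R]_n)
  (B : 'M[R]_(n, nu)) (Cm : 'M[R]_(ny, n)) (D : 'M[R]_(ny, nu))
  (tau : 'I_m -> R) (xi : R) (lam : Cx) : 'M[Cx]_(n + n) :=
  lam%:M - toCmx (Mzero A0 B Cm D xi)
  - \sum_(i < m) (cexp (- (lam * (tau i)%:C)) *: toCmx (Mplus (A i))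
                  + cexp (lam * (tau i)%:C) *: toCmx (Mminus (A i))).

End TDSDefs.

(* Main.v *)
Require Import Defs.
From HB Require Import structures.
From mathcomp Require Import all_boot all_order all_algebra.
From mathcomp Require Import complex.
From mathcomp Require Import reals sequences exp trigo.
From mathcomp Require Import ring lra.
Import Order.TTheory GRing.Theory Num.Theory.
Set Implicit Arguments. Unset Strict Implicit. Unset Printing Implicit Defensive.
Local Open Scope ring_scope.
Local Open Scope complex_scope.

Section Glue.
Variable R : realType.
Local Notation Cx := R[i].

Lemma conjT_toC p q (X : 'M[R]_(p,q)) : conjT (toCmx X) = toCmx X^T.
Proof. by apply/matrixP => i j; rewrite !mxE conjc_real. Qed.

Lemma conjT_mul p q r (X : 'M[Cx]_(p,q)) (Y : 'M[Cx]_(q,r)) :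
  conjT (X *m Y) = conjT Y *m conjT X.
Proof. by rewrite /conjT map_mxM trmx_mul. Qed.

Lemma conjT_inv p (X : 'M[Cx]_p) : conjT (invmx X) = invmx (conjT X).
Proof. by rewrite /conjT map_invmx trmx_inv. Qed.

Lemma conjT_add p q (X Y : 'M[Cx]_(p,q)) : conjT (X + Y) = conjT X + conjT Y.
Proof. by apply/matrixP => i j; rewrite !mxE rmorphD. Qed.

Lemma conjT_opp p q (X : 'M[Cx]_(p,q)) : conjT (- X) = - conjT X.
Proof. by apply/matrixP => i j; rewrite !mxE rmorphN. Qed.

Lemma conjT_scale p q a (X : 'M[Cx]_(p,q)) : conjT (a *: X) = conjc a *: conjT X.
Proof. by apply/matrixP => i j; rewrite !mxE rmorphM. Qed.

Lemma conjT_scalar p (a : Cx) : conjT (a%:M : 'M_p) = (conjc a)%:M.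
Proof. by rewrite /conjT map_scalar_mx tr_scalar_mx. Qed.

Lemma conjT_sum p q (I : Type) (r : seq I) (P : I -> 'M[Cx]_(p,q)) :
  conjT (\sum_(i <- r) P i) = \sum_(i <- r) conjT (P i).
Proof.
apply/matrixP => i j; rewrite !mxE !summxE rmorph_sum; apply: eq_bigr => k _.
by rewrite !mxE.
Qed.

Lemma sum_block m1 m2 n1 n2 (I : Type) (r : seq I) (P : I -> 'M[Cx]_(m1,n1))
  (Q : I -> 'M[Cx]_(m1,n2)) (S : I -> 'M[Cx]_(m2,n1)) (T : I -> 'M[Cx]_(m2,n2)) :
  \sum_(i <- r) block_mx (P i) (Q i) (S i) (T i) =
  block_mx (\sum_(i <- r) P i) (\sum_(i <- r) Q i) (\sum_(i <- r) S i) (\sum_(i <- r) T i).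
Proof.
elim: r => [|k r IH]; first by rewrite !big_nil block_mx0.
by rewrite !big_cons IH add_block_mx.
Qed.

Lemma cexp_im (t : R) : cexp (0 +i* t) = cos t +i* sin t.
Proof. by rewrite /cexp /= expR0 mul1r. Qed.

Lemma conj_cexp_im (t : R) : conjc (cexp (0 +i* t)) = cexp (0 +i* (- t)).
Proof. by rewrite !cexp_im cosN sinN. Qed.

Lemma lam_eq (w : R) : 'i * w%:C = 0 +i* w.
Proof. by apply/eqP; rewrite eq_complex /=; apply/andP; split; apply/eqP; ring. Qed.

Lemma conj_lam (w : R) : conjc ('i * w%:C) = - ('i * w%:C).
Proof. by rewrite lam_eq; apply/eqP; rewrite eq_complex /=; apply/andP; split; apply/eqP; ring. Qed.

Lemma e_eq (w t : R) : - (t%:C * ('i * w%:C)) = 0 +i* (- (t * w)).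
Proof. by rewrite lam_eq; apply/eqP; rewrite eq_complex /=; apply/andP; split; apply/eqP; ring. Qed.

Lemma f_eq (w t : R) : ('i * w%:C) * t%:C = 0 +i* (t * w).
Proof. by rewrite lam_eq; apply/eqP; rewrite eq_complex /=; apply/andP; split; apply/eqP; ring. Qed.

End Glue.
Section Abs.
Variable F : fieldType.
Variables (n p q : nat).
Variables (Dl Dh : 'M[F]_n) (b : 'M[F]_(n,p)) (c : 'M[F]_(q,n)) (d : 'M[F]_(q,p))
  (bt : 'M[F]_(p,n)) (ct : 'M[F]_(n,q)) (dt : 'M[F]_(p,q)) (di dx : 'M[F]_p) (s : F).
Hypotheses (uD : Dl \in unitmx) (uDh : Dh \in unitmx)
  (hdi1 : di *m dx = 1%:M) (hdi2 : dx *m di = 1%:M) (hdx : dx = dt *m d - s%:M).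

Let G := c *m invmx Dl *m b + d.
Let Gh := bt *m invmx Dh *m ct + dt.
Let Hb := block_mx (Dl + b *m di *m dt *m c) (b *m di *m bt)
   (- (ct *m (d *m di *m dt - 1%:M) *m c)) (- Dh - ct *m d *m di *m bt).

Lemma abs_equiv :
  (exists2 u : 'cV[F]_p, u != 0 & Gh *m G *m u = s *: u) <->
  (exists2 z : 'cV[F]_(n + n), z != 0 & Hb *m z = 0).
Proof.
have hdxu : forall u : 'cV[F]_p, dx *m u = dt *m (d *m u) - s *: u.
  by move=> u; rewrite hdx mulmxBl mul_scalar_mx mulmxA.
split.
- move=> [u u0 hu].
  pose v := G *m u.
  pose x := invmx Dl *m (b *m u).
  pose y := invmx Dh *m (ct *m v).
  have hx : Dl *m x = b *m u by rewrite /x mulKVmx.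
  have hy : Dh *m y = ct *m v by rewrite /y mulKVmx.
  have hcx : c *m x = v - d *m u.
    by rewrite /v /G mulmxDl addrK /x !mulmxA.
  have hby : bt *m y = s *: u - dt *m v.
    by rewrite -hu -/v -mulmxA /Gh mulmxDl addrK /y !mulmxA.
  have hw : dt *m (c *m x) + bt *m y = - (dx *m u).
    rewrite hcx hby hdxu mulmxBr opprB.
    by rewrite addrC addrA subrK.
  exists (col_mx x y).
    rewrite col_mx_eq0; apply: contra u0 => /andP[/eqP x0 /eqP y0].
    move: hw; rewrite x0 y0 !mulmx0 addr0 => /eqP; rewrite eq_sym oppr_eq0 => /eqP h.
    by rewrite -[u]mul1mx -hdi1 -mulmxA h mulmx0.
  rewrite mul_block_col -col_mx0; congr col_mx.
    rewrite mulmxDl hx -!mulmxA -addrA -!mulmxDr hw mulmxN mulmxA hdi1 mul1mx subrr mulmx0.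
    done.
  clearbody x y v.
  rewrite mulmxDl !mulNmx mulmxBr mulmx1 !mulmxBl !mulmxA hy.
  set P := ct *m d *m di *m dt *m c *m x.
  set Q := ct *m d *m di *m bt *m y.
  have hPQ : P + Q = - (ct *m (d *m u)).
    by rewrite /P /Q -!mulmxA -!mulmxDr hw !mulmxN (mulmxA di) hdi1 mul1mx.
  have -> : - (P - ct *m c *m x) + (- (ct *m v) - Q) = ct *m c *m x - ct *m v - (P + Q).
    by rewrite opprB opprD -!addrA; congr (_ + _); rewrite addrCA.
  by rewrite hPQ opprK -mulmxA hcx mulmxBr addrAC subrK subrr.
- move=> [z z0 hz].
  pose x := usubmx z. pose y := dsubmx z.
  have ez : z = col_mx x y by rewrite vsubmxK.
  move: hz; rewrite ez mul_block_col -col_mx0 => /eq_col_mx [htop hbot].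
  pose w := dt *m (c *m x) + bt *m y.
  pose u := - (di *m w).
  have hdu : dx *m u = - w by rewrite /u mulmxN mulmxA hdi2 mul1mx.
  have hx : Dl *m x = b *m u.
    move: htop; rewrite mulmxDl -!mulmxA -addrA -!mulmxDr -/w => /eqP.
    rewrite addr_eq0 => /eqP ->.
    by rewrite /u mulmxN.
  have ex : x = invmx Dl *m (b *m u) by rewrite -hx mulKmx.
  pose v := c *m x + d *m u.
  have hy : Dh *m y = ct *m v.
    move: hbot; rewrite mulmxDl !mulNmx mulmxBr mulmx1 !mulmxBl !mulmxA.
    set P := ct *m d *m di *m dt *m c *m x.
    set Q := ct *m d *m di *m bt *m y.
    have hPQ : P + Q = - (ct *m (d *m u)).
      by rewrite /P /Q -!mulmxA -!mulmxDr -/w /u !mulmxN opprK.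
    have -> : - (P - ct *m c *m x) + (- (Dh *m y) - Q) = ct *m c *m x - Dh *m y - (P + Q).
      by rewrite opprB opprD -!addrA; congr (_ + _); rewrite addrCA.
    rewrite hPQ opprK => /eqP; rewrite addrAC subr_eq0 => /eqP <-.
    by rewrite -mulmxA -mulmxDr.
  have ey : y = invmx Dh *m (ct *m v) by rewrite -hy mulKmx.
  have hGu : G *m u = v by rewrite /G mulmxDl -!mulmxA -ex.
  have hGh : Gh *m v = s *: u.
    rewrite /Gh mulmxDl -!mulmxA -ey.
    have -> : bt *m y = w - dt *m (c *m x) by rewrite /w addrAC subrr add0r.
    rewrite -[w]opprK -hdu hdxu opprB /v mulmxDr.
    by rewrite -addrA addKr subrK.
  exists u; last by rewrite -mulmxA hGu hGh.
  apply: contra z0 => /eqP u0.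
  have x0 : x = 0 by rewrite ex u0 !mulmx0.
  have v0 : v = 0 by rewrite /v x0 u0 !mulmx0 addr0.
  have y0 : y = 0 by rewrite ey v0 !mulmx0.
  by rewrite ez x0 y0 col_mx0.
Qed.
End Abs.
Lemma det_col (F : fieldType) k (M : 'M[F]_k) :
  \det M = 0 <-> exists2 z : 'cV_k, z != 0 & M *m z = 0.
Proof.
split.
- move=> /eqP; rewrite -det_tr => /det0P [v v0 hv].
  exists v^T; first by apply: contra v0 => /eqP h; rewrite -[v]trmxK h trmx0.
  by rewrite -[M]trmxK -trmx_mul hv trmx0.
- move=> [z z0 hz]; apply/eqP; rewrite -det_tr; apply/det0P; exists z^T.
    by apply: contra z0 => /eqP h; rewrite -[z]trmxK h trmx0.
  by rewrite -trmx_mul hz trmx0.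
Qed.

Lemma eig_col (F : fieldType) k (g : 'M[F]_k) a :
  eigenvalue g a <-> exists2 u : 'cV_k, u != 0 & g *m u = a *: u.
Proof.
have -> : eigenvalue g a = (\det (g - a%:M) == 0).
  by rewrite /eigenvalue /eigenspace kermx_eq0 row_free_unit unitmxE unitfE negbK.
split.
- move=> /eqP /det_col [u u0 hu]; exists u => //.
  by apply/eqP; rewrite -subr_eq0 -mul_scalar_mx -mulmxBl hu.
- move=> [u u0 hu]; apply/eqP/det_col; exists u => //.
  by rewrite mulmxBl mul_scalar_mx hu subrr.
Qed.

Theorem theorem4 (R : realType) (n m nu ny : nat)
  (A0 : 'M[R]_n) (A : 'I_m -> 'M[R]_n) (B : 'M[R]_(n, nu))
  (Cm : 'M[R]_(ny, n)) (D : 'M[R]_(ny, nu)) (tau : 'I_m -> R) (xi : R) :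
  (0 < n)%N -> (0 < m)%N -> (0 < nu)%N -> (0 < ny)%N ->
  (forall i, 0 <= tau i) ->
  tds_stable A0 A tau ->
  0 < xi ->
  Dxi D xi \in unitmx ->
  forall w : R, 0 <= w ->
    (is_singular_value (tfun A0 A B Cm D tau ('i * w%:C)) xi <->
     \det (Hxi A0 A B Cm D tau xi ('i * w%:C)) = 0).
Proof.
move=> _ _ _ _ _ hst xi0 hD w w0.
set lam := 'i * w%:C.
have uD : char_mx A0 A tau lam \in unitmx.
  by rewrite unitmxE unitfE; apply/eqP => /hst; rewrite /lam lam_eq /= ltxx.
set Dl := char_mx A0 A tau lam.
have uDh : conjT Dl \in unitmx.
  by rewrite unitmxE /conjT det_tr det_map_mx unitfE conjc_eq0 -unitfE -unitmxE.
pose Di := invmx (Dxi D xi).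
have hDi1 : Di *m Dxi D xi = 1%:M by rewrite mulVmx.
have hDi2 : Dxi D xi *m Di = 1%:M by rewrite mulmxV.
have hDD : Dtxi D xi *m D = D *m Dxi D xi.
  by rewrite /Dtxi /Dxi mulmxBl mulmxBr mul_scalar_mx mul_mx_scalar !mulmxA.
have h : Dtxi D xi *m (D *m Di *m D^T - 1%:M) = (xi ^+ 2)%:M.
  rewrite mulmxBr mulmx1 !mulmxA hDD -(mulmxA D) hDi2 mulmx1 /Dtxi.
  by rewrite opprB addrC subrK.
have xi2 : xi ^+ 2 != 0 by rewrite expf_neq0 // gt_eqF.
have h' : Dtxi D xi *m ((xi ^+ 2)^-1 *: (D *m Di *m D^T - 1%:M)) = 1%:M.
  by rewrite -scalemxAr h scale_scalar_mx mulVf.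
have hDt : xi ^+ 2 *: invmx (Dtxi D xi) = D *m Di *m D^T - 1%:M.
  have uDt := (mulmx1_unit h').1.
  have -> : invmx (Dtxi D xi) = (xi ^+ 2)^-1 *: (D *m Di *m D^T - 1%:M).
    by have := congr1 (mulmx (invmx (Dtxi D xi))) h'; rewrite mulKmx // mulmx1 => ->.
  by rewrite scalerA mulfV // scale1r.
have hMz : Mzero A0 B Cm D xi = block_mx (A0 - B *m Di *m D^T *m Cm) (- (B *m Di *m B^T))
   (Cm^T *m (D *m Di *m D^T - 1%:M) *m Cm) (- A0^T + Cm^T *m D *m Di *m B^T).
  by rewrite /Mzero scalemxAl scalemxAr hDt.
have hdi1 : toCmx Di *m toCmx (Dxi D xi) = 1%:M by rewrite /toCmx -map_mxM hDi1 map_mx1.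
have hdi2 : toCmx (Dxi D xi) *m toCmx Di = 1%:M by rewrite /toCmx -map_mxM hDi2 map_mx1.
have hdx : toCmx (Dxi D xi) = toCmx D^T *m toCmx D - ((xi ^+ 2)%:C)%:M.
  by rewrite /toCmx /Dxi map_mxB map_mxM map_scalar_mx.
have key := @abs_equiv _ n nu ny Dl (conjT Dl) (toCmx B) (toCmx Cm) (toCmx D)
  (toCmx B^T) (toCmx Cm^T) (toCmx D^T) (toCmx Di) (toCmx (Dxi D xi))
  ((xi ^+ 2)%:C) uD uDh hdi1 hdi2 hdx.
have hG : conjT (tfun A0 A B Cm D tau lam) = toCmx B^T *m invmx (conjT Dl) *m toCmx Cm^T + toCmx D^T.
  by rewrite /tfun conjT_add !conjT_mul conjT_inv !conjT_toC mulmxA.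
have hH : Hxi A0 A B Cm D tau xi lam = block_mx (Dl + toCmx B *m toCmx Di *m toCmx D^T *m toCmx Cm) (toCmx B *m toCmx Di *m toCmx B^T)
   (- (toCmx Cm^T *m (toCmx D *m toCmx Di *m toCmx D^T - 1%:M) *m toCmx Cm)) (- conjT Dl - toCmx Cm^T *m toCmx D *m toCmx Di *m toCmx B^T).
  have hsum : \sum_(i < m) (cexp (- (lam * (tau i)%:C)) *: toCmx (Mplus (A i))
                  + cexp (lam * (tau i)%:C) *: toCmx (Mminus (A i))) =
     block_mx (\sum_(i < m) cexp (- ((tau i)%:C * lam)) *: toCmx (A i)) 0 0
              (- \sum_(i < m) cexp (lam * (tau i)%:C) *: toCmx (A i)^T).
    transitivity (\sum_(i < m) block_mx (cexp (- ((tau i)%:C * lam)) *: toCmx (A i)) 0 0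
              (- (cexp (lam * (tau i)%:C) *: toCmx (A i)^T))).
      apply: eq_bigr => i _.
      rewrite /toCmx /Mplus /Mminus !map_block_mx !map_mx0 map_mxN !scale_block_mx !scaler0 add_block_mx.
      by rewrite !addr0 !add0r scalerN mulrC.
    by rewrite sum_block !big1_eq sumrN.
  have hDh : conjT Dl = (- lam)%:M - toCmx A0^T - \sum_(i < m) cexp (lam * (tau i)%:C) *: toCmx (A i)^T.
    rewrite /Dl /char_mx !conjT_add !conjT_opp conjT_scalar conj_lam conjT_toC conjT_sum.
    congr (_ - _); apply: eq_bigr => i _.
    by rewrite conjT_scale conjT_toC /lam e_eq conj_cexp_im opprK f_eq.
  rewrite /Hxi hsum hMz hDh /Dl /char_mx /toCmx !map_block_mx.
  rewrite !(map_mxB, map_mxN, map_mxD, map_mxM, map_mx1) (@scalar_mx_block _ n n lam).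
  rewrite !opp_block_mx !add_block_mx; congr block_mx.
  - by rewrite opprB addrA (addrAC lam%:M) [LHS]addrAC.
  - by rewrite subr0 sub0r opprK.
  - by rewrite subr0 sub0r.
  have -> : ((- lam)%:M : 'M[R[i]]_n) = - lam%:M by apply/matrixP=> i j; rewrite !mxE mulNrn.
  by rewrite !opprD !opprK addrA addrAC (addrAC lam%:M) [LHS]addrAC.
split.
- move=> [_ /eig_col hE]; apply/det_col; rewrite hH; apply/key.
  by rewrite -hG.
- move=> /det_col; rewrite hH => /key hE; split; first exact: ltW.
  by apply/eig_col; rewrite hG.
Qed.
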